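(* Consider the hybrid size-control closed loop (context) and assume $x(t)\in\mathcal M_n$ for all $t\ge0$. Let $\beta=\sqrt{2(1-\cos(2\pi/n))}$, $\gamma_m=\sin(m\pi/n)/\sin(\pi/n)$ (so that $\|x_{i+m}-x_i\|=\gamma_m\|x_{i+1}-x_i\|$ for $x\in\mathcal M_n$), $\Gamma=\sum_{m=1}^N k_m\gamma_m$ and $C=2\beta\Gamma$. Then $p_1(t)=\dots=p_n(t)=\bar p(t)$, on each interval $[\ell\tau,(\ell+1)\tau)$ one has $\dot p_i=C\sin(\alpha_s)(p_i-1)$ with $\alpha_s=\alpha_{s_0}f_s(p_i((\ell-1)\tau))$ constant, and consequently, writing $p_{i_\ell}:=p_i(\ell\tau)$, $$p_{i_{\ell+1}}=(p_{i_\ell}-1)\,e^{C\sin(\alpha_{s_0}f_s(p_{i_{\ell-1}}))\tau}+1 .$$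
   Context: $n\ge3$ robots, $x=(x_1^T,\dots,x_n^T)^T$, indices mod $n$; $e_z=(0,0,1)^T$; $R_\theta$ is counterclockwise rotation by $\theta$ about $e_z$; $L_m$ is the $n\times n$ circulant matrix with first row having $1$ in position 1, $-1$ in position $m+1$, zeros elsewhere. $\mathcal M_n$ is the set of $x$ with $x_{i+1}-x_i=R_{2\pi/n}(x_{i+2}-x_{i+1})$ ($i=1,\dots,n-2$) and $e_z^T(x_n-x_{n-1})=e_z^T(x_1-x_n)$. Size control: $\rho>0$; $p_i(x)=1-\|x_{i+1}-x_i\|/\rho$; $\bar p=\frac1n\sum_ip_i$; $f_s$ continuous odd, $pf_s(p)>0$ for $p\neq0$, $|f_s|\le1$, $f_s'(0)>a>0$; $\alpha_{s_0}>0$, $\tau>0$, $0<N<n-1$, $k_m>0$. Closed loop: $\dot x=-\sum_{m=1}^Nk_m(L_m\otimes R_{\alpha_m}+L_m^T\otimes R_{\alpha_m}^T)x$ on $[\ell\tau,(\ell+1)\tau)$, $\ell=0,1,\dots$, with $\alpha_m=m\pi/n+\alpha_{s_0}f_s(\bar p(x((\ell-1)\tau)))$ (for $\ell=0$ use $x(0)$). *)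

(* Defs.v *)
From Stdlib Require Import Reals.
Open Scope R_scope.

Definition V3 : Type := (R * R * R)%type.
Definition vx (v : V3) : R := fst (fst v).
Definition vy (v : V3) : R := snd (fst v).
Definition vz (v : V3) : R := snd v.
Definition mkV (a b c : R) : V3 := (a, b, c).
Definition vsub (u v : V3) : V3 := mkV (vx u - vx v) (vy u - vy v) (vz u - vz v).
Definition vadd (u v : V3) : V3 := mkV (vx u + vx v) (vy u + vy v) (vz u + vz v).
Definition vscale (a : R) (v : V3) : V3 := mkV (a * vx v) (a * vy v) (a * vz v).
Definition vnorm (v : V3) : R := sqrt (vx v ^ 2 + vy v ^ 2 + vz v ^ 2).

Definition rot (th : R) (v : V3) : V3 :=
  mkV (cos th * vx v - sin th * vy v) (sin th * vx v + cos th * vy v) (vz v).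
Definition rotT (th : R) (v : V3) : V3 :=
  mkV (cos th * vx v + sin th * vy v) (- sin th * vx v + cos th * vy v) (vz v).

Fixpoint vsum1 (g : nat -> V3) (N : nat) : V3 :=
  match N with O => mkV 0 0 0 | S N' => vadd (vsum1 g N') (g (S N')) end.
Fixpoint rsum1 (g : nat -> R) (N : nat) : R :=
  match N with O => 0 | S N' => rsum1 g N' + g (S N') end.
Fixpoint rsum0 (g : nat -> R) (n : nat) : R :=
  match n with O => 0 | S n' => rsum0 g n' + g n' end.

(* Configuration: robots indexed 0..n-1 (robot i here = robot i+1 of the paper);
   indices are taken mod n. *)
Definition Config : Type := nat -> V3.
Definition pos (n : nat) (x : Config) (i : nat) : V3 := x (i mod n).

Definition in_Mn (n : nat) (x : Config) : Prop :=
  (forall i, (i + 2 < n)%nat ->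
     vsub (pos n x (i+1)) (pos n x i) =
     rot (2 * PI / INR n) (vsub (pos n x (i+2)) (pos n x (i+1)))) /\
  vz (vsub (pos n x (n-1)) (pos n x (n-2))) = vz (vsub (pos n x 0) (pos n x (n-1))).

Definition p_i (n : nat) (rho : R) (x : Config) (i : nat) : R :=
  1 - vnorm (vsub (pos n x (i+1)) (pos n x i)) / rho.
Definition pbar (n : nat) (rho : R) (x : Config) : R :=
  / INR n * rsum0 (fun i => p_i n rho x i) n.

(* i-th block of  -sum_m k_m (L_m (x) R_{a_m} + L_m^T (x) R_{a_m}^T) x ;
   (L_m x)_i = x_i - x_{i+m},  (L_m^T x)_i = x_i - x_{i-m}. *)
Definition closed_loop_rhs (n N : nat) (k : nat -> R) (alpha : nat -> R)
    (x : Config) (i : nat) : V3 :=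
  vscale (-1) (vsum1 (fun m =>
     vscale (k m)
       (vadd (rot (alpha m) (vsub (pos n x i) (pos n x (i + m))))
             (rotT (alpha m) (vsub (pos n x i) (pos n x (i + (n - m))))))) N).

(* sampling time used on [l tau, (l+1) tau): (l-1) tau, and 0 for l = 0 *)
Definition sample_time (tau : R) (l : nat) : R :=
  match l with O => 0 | S l' => INR l' * tau end.

Definition cont_nonneg (f : R -> R) : Prop :=
  forall t, 0 <= t -> forall eps, eps > 0 -> exists d, d > 0 /\
    forall s, 0 <= s -> Rabs (s - t) < d -> Rabs (f s - f t) < eps.

Definition hybrid_solution (n N : nat) (k : nat -> R) (rho alpha_s0 tau : R)
    (fs : R -> R) (x : R -> Config) : Prop :=
  forall i, (i < n)%nat ->
    cont_nonneg (fun t => vx (x t i)) /\ cont_nonneg (fun t => vy (x t i)) /\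
    cont_nonneg (fun t => vz (x t i)) /\
    forall l : nat, forall t, INR l * tau < t < INR (S l) * tau ->
      let alpha := fun m : nat =>
        INR m * PI / INR n + alpha_s0 * fs (pbar n rho (x (sample_time tau l))) in
      let v := closed_loop_rhs n N k alpha (x t) i in
      derivable_pt_lim (fun s => vx (x s i)) t (vx v) /\
      derivable_pt_lim (fun s => vy (x s i)) t (vy v) /\
      derivable_pt_lim (fun s => vz (x s i)) t (vz v).

Definition beta_n (n : nat) : R := sqrt (2 * (1 - cos (2 * PI / INR n))).
Definition gamma_m (n m : nat) : R := sin (INR m * PI / INR n) / sin (PI / INR n).
Definition Gamma_c (n N : nat) (k : nat -> R) : R := rsum1 (fun m => k m * gamma_m n m) N.
Definition C_c (n N : nat) (k : nat -> R) : R := 2 * beta_n n * Gamma_c n N k.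

(* Main.v *)
Require Import Defs.
From Stdlib Require Import Reals.
Open Scope R_scope.
From Stdlib Require Import Lra Lia.
Import Defs.

Lemma V3_ext u v : vx u = vx v -> vy u = vy v -> vz u = vz v -> u = v.
Proof. destruct u as [[a b] c], v as [[d e] f]; unfold vx,vy,vz; simpl; intros; subst; auto. Qed.

Ltac comps := apply V3_ext; unfold rot, rotT, vadd, vsub, vscale, mkV, vx, vy, vz; simpl.

Lemma rot_comp a b v : rot a (rot b v) = rot (a+b) v.
Proof. comps; rewrite ?cos_plus, ?sin_plus; ring. Qed.

Lemma rot0 v : rot 0 v = v.
Proof. comps; rewrite ?cos_0, ?sin_0; ring. Qed.

Lemma rot_period a (q : nat) v : rot (a + 2 * INR q * PI) v = rot a v.
Proof. comps; rewrite ?cos_period, ?sin_period; ring. Qed.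

Lemma rot_add a u v : rot a (vadd u v) = vadd (rot a u) (rot a v).
Proof. comps; ring. Qed.
Lemma rot_sub a u v : rot a (vsub u v) = vsub (rot a u) (rot a v).
Proof. comps; ring. Qed.
Lemma vz_rot a v : vz (rot a v) = vz v.
Proof. reflexivity. Qed.

Lemma vnorm_rot a v : vnorm (rot a v) = vnorm v.
Proof.
  unfold vnorm; f_equal. unfold rot, mkV, vx, vy, vz; simpl.
  pose proof (sin2_cos2 a) as H. unfold Rsqr in H. nra.
Qed.

Lemma term_id k phi s w : vz w = 0 ->
  vscale k (vadd (rot (phi+s) (vsub w (rot (-(2*phi)) w)))
                  (rotT (phi+s) (vsub w (rot (2*phi) w))))
  = vscale (-4 * k * sin phi * sin s) w.
Proof.
  intro Hz. comps; unfold vz in Hz;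
  rewrite ?cos_plus, ?sin_plus, ?cos_neg, ?sin_neg, ?cos_2a_sin, ?sin_2a;
  pose proof (sin2_cos2 phi) as H; unfold Rsqr in H;
  [ match goal with |- _ = ?R => transitivity (R*(sin phi * sin phi + cos phi * cos phi)); [ring|rewrite H; ring] end
  | match goal with |- _ = ?R => transitivity (R*(sin phi * sin phi + cos phi * cos phi)); [ring|rewrite H; ring] end
  | rewrite Hz; ring ].
Qed.


Lemma pos_lt n y j : (j < n)%nat -> pos n y j = y j.
Proof. intro H; unfold pos; rewrite Nat.mod_small; auto. Qed.

Lemma INRpos3 n : (3 <= n)%nat -> 0 < INR n.
Proof. intro; apply lt_0_INR; lia. Qed.

Lemma sin_half_pos n : (3 <= n)%nat -> 0 < sin (PI / INR n).
Proof.
  intro H. pose proof (INRpos3 n H). assert (3 <= INR n) by (replace 3 with (INR 3) by (simpl; ring); apply le_INR; auto).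
  apply sin_gt_0. apply Rdiv_lt_0_compat; [apply PI_RGT_0|lra].
  pose proof PI_RGT_0. apply Rmult_lt_reg_r with (INR n); auto.
  unfold Rdiv; rewrite Rmult_assoc, Rinv_l by lra. nra.
Qed.

Lemma vadd_assoc a b c : vadd (vadd a b) c = vadd a (vadd b c).
Proof. comps; ring. Qed.

Lemma Mn_form n y : (3 <= n)%nat -> in_Mn n y ->
  exists c u, vz u = 0 /\ forall j, pos n y j = vadd c (rot (-(INR j * (2*PI/INR n))) u).
Proof.
  intros Hn [H1 H2].
  pose proof (INRpos3 n Hn) as Hnp.
  set (th := 2*PI/INR n).
  set (D := fun j => vsub (pos n y (j+1)) (pos n y j)).
  assert (A : forall j, (j+2<n)%nat -> D (j+1)%nat = rot (-th) (D j)).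
  { intros j Hj. unfold D. rewrite (H1 j Hj). rewrite rot_comp.
    replace (-th + 2*PI/INR n) with 0 by (unfold th; ring). rewrite rot0. f_equal; f_equal; lia. }
  assert (B : forall j, (j+1<n)%nat -> D j = rot (-(INR j*th)) (D 0%nat)).
  { induction j; intro Hj.
    - change (INR 0) with 0. replace (-(0*th)) with 0 by ring. now rewrite rot0.
    - replace (S j) with (j+1)%nat by lia. rewrite A by lia. rewrite IHj by lia.
      rewrite rot_comp, plus_INR. f_equal. simpl; ring. }
  set (z0 := vz (D 0%nat)).
  assert (Yz : forall j, (j < n)%nat -> vz (y j) = vz (y 0%nat) + INR j * z0).
  { induction j; intro Hj.
    - simpl; ring.
    - assert (E := B j ltac:(lia)). apply (f_equal vz) in E. rewrite vz_rot in E.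
      unfold D in E. rewrite !pos_lt in E by lia. unfold vsub, vz, mkV in E; simpl in E.
      replace (S j) with (j+1)%nat by lia. unfold vz in *. rewrite plus_INR; simpl.
      fold z0 in E. unfold vz in z0. rewrite IHj in E by lia.
      assert (Hz: z0 = snd (y 1%nat) - snd (y 0%nat)) by (unfold z0, D; rewrite !pos_lt by lia; reflexivity). lra. }
  assert (Hz0 : z0 = 0).
  { unfold vsub, vz, mkV in H2; simpl in H2.
    rewrite !pos_lt in H2 by lia. fold (vz (y (n-1)%nat)) (vz (y (n-2)%nat)) (vz (y 0%nat)) in H2.
    rewrite (Yz (n-1)%nat), (Yz (n-2)%nat) in H2 by lia. rewrite !minus_INR in H2 by lia. simpl in H2.
    assert (INR n * z0 = 0) by lra. apply Rmult_integral in H. destruct H; lra. }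
  set (a := vx (D 0%nat)). set (b := vy (D 0%nat)).
  set (cc := cos th). set (ss := sin th).
  assert (Hsc : ss*ss + cc*cc = 1) by (pose proof (sin2_cos2 th) as H; unfold Rsqr in H; exact H).
  assert (Hcc : cc < 1).
  { unfold cc, th. replace (2*PI/INR n) with (2*(PI/INR n)) by (field; lra).
    rewrite cos_2a_sin. pose proof (sin_half_pos n Hn). assert (0 < sin (PI/INR n) * sin (PI/INR n)) by (apply Rmult_lt_0_compat; auto). lra. }
  set (De := 2 - 2*cc).
  assert (HDe : De <> 0) by (unfold De; lra).
  set (u := mkV (((cc-1)*a - ss*b)/De) ((ss*a + (cc-1)*b)/De) 0).
  assert (Hu : vadd u (D 0%nat) = rot (-th) u).
  { assert (HD0 : D 0%nat = mkV a b z0) by (apply V3_ext; reflexivity).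
    rewrite HD0. unfold u. clearbody a b z0. comps; rewrite ?cos_neg, ?sin_neg; fold cc ss.
    - apply Rminus_diag_uniq. match goal with |- ?L = 0 => replace L with (a*(1 - (ss*ss+cc*cc))/De) by (unfold De; field; lra) end.
      rewrite Hsc; unfold De; field; lra.
    - apply Rminus_diag_uniq. match goal with |- ?L = 0 => replace L with (b*(1 - (ss*ss+cc*cc))/De) by (unfold De; field; lra) end.
      rewrite Hsc; unfold De; field; lra.
    - rewrite Hz0; ring. }
  set (c := vsub (y 0%nat) u).
  assert (Yf : forall j, (j<n)%nat -> y j = vadd c (rot (-(INR j*th)) u)).
  { induction j; intro Hj.
    - change (INR 0) with 0; replace (-(0*th)) with 0 by ring; rewrite rot0. unfold c; comps; ring.
    - assert (Ey : y (S j) = vadd (y j) (D j)).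
      { unfold D. rewrite !pos_lt by lia. replace (j+1)%nat with (S j) by lia. comps; ring. }
      rewrite Ey, IHj by lia. rewrite (B j) by lia.
      rewrite vadd_assoc, <- rot_add, Hu, rot_comp. f_equal. f_equal. rewrite S_INR; ring. }
  exists c, u. split; [reflexivity|]. intro j.
  unfold pos at 1. rewrite Yf by (apply Nat.mod_upper_bound; lia).
  assert (Hj: INR j = INR n * INR (j/n) + INR (j mod n)).
  { rewrite <- mult_INR, <- plus_INR; f_equal; apply Nat.div_mod; lia. }
  assert (E: -(INR (j mod n)*th) = -(INR j*th) + 2*INR (j/n)*PI).
  { rewrite Hj. unfold th; field; lra. }
  rewrite E, rot_period. reflexivity.
Qed.


Lemma vsub_vadd c v w : vsub (vadd c v) (vadd c w) = vsub v w.
Proof. comps; ring. Qed.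

Lemma edge_norm n y c u : (3 <= n)%nat ->
  (forall j, pos n y j = vadd c (rot (-(INR j * (2*PI/INR n))) u)) ->
  forall i, vnorm (vsub (pos n y (i+1)) (pos n y i)) = vnorm (vsub (rot (-(2*PI/INR n)) u) u).
Proof.
  intros Hn Hp i. rewrite !Hp, vsub_vadd.
  replace (-(INR (i+1) * (2*PI/INR n))) with (-(INR i * (2*PI/INR n)) + -(2*PI/INR n))
    by (rewrite plus_INR; simpl; ring).
  rewrite <- rot_comp, <- rot_sub, vnorm_rot. reflexivity.
Qed.

Lemma p_const n rho y : (3 <= n)%nat -> in_Mn n y -> forall i, p_i n rho y i = p_i n rho y 0.
Proof.
  intros Hn HM i. destruct (Mn_form n y Hn HM) as [c [u [Hu Hp]]].
  unfold p_i. rewrite !(edge_norm n y c u Hn Hp). reflexivity.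
Qed.

Lemma rsum0_const f K n : (forall i, f i = K) -> rsum0 f n = INR n * K.
Proof. intro H; induction n; simpl rsum0. simpl; ring. rewrite IHn, H, S_INR; ring. Qed.

Lemma pbar_eq n rho y : (3 <= n)%nat -> in_Mn n y -> forall i, p_i n rho y i = pbar n rho y.
Proof.
  intros Hn HM i. unfold pbar. rewrite (rsum0_const _ (p_i n rho y 0)) by (apply p_const; auto).
  rewrite (p_const n rho y Hn HM i). pose proof (INRpos3 n Hn). field. lra.
Qed.

Lemma rsum1_ext f g N : (forall m, (1 <= m <= N)%nat -> f m = g m) -> rsum1 f N = rsum1 g N.
Proof. induction N; intro H; simpl; auto. rewrite IHN by (intros; apply H; lia). rewrite H by lia; auto. Qed.

Lemma rsum1_scale f c N : rsum1 (fun m => f m * c) N = rsum1 f N * c.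
Proof. induction N; simpl. ring. rewrite IHN; ring. Qed.

Lemma vsum1_ext f g N : (forall m, (1 <= m <= N)%nat -> f m = g m) -> vsum1 f N = vsum1 g N.
Proof. induction N; intro H; simpl; auto. rewrite IHN by (intros; apply H; lia). rewrite H by lia; auto. Qed.

Lemma vsum1_scale f w N : vsum1 (fun m => vscale (f m) w) N = vscale (rsum1 f N) w.
Proof. induction N; simpl. comps; ring. rewrite IHN. comps; ring. Qed.

Lemma C_c_eq n N k : (3 <= n)%nat ->
  C_c n N k = 4 * rsum1 (fun m => k m * sin (INR m * PI / INR n)) N.
Proof.
  intro Hn. pose proof (sin_half_pos n Hn) as Hs. pose proof (INRpos3 n Hn).
  unfold C_c, Gamma_c, gamma_m, beta_n.
  replace (2 * (1 - cos (2 * PI / INR n))) with ((2*sin (PI/INR n)) * (2*sin (PI/INR n))).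
  2:{ replace (2*PI/INR n) with (2*(PI/INR n)) by (field; lra). rewrite cos_2a_sin. ring. }
  rewrite sqrt_square by lra.
  rewrite (rsum1_ext _ (fun m => (k m * sin (INR m * PI / INR n)) * / sin (PI / INR n)))
    by (intros; unfold Rdiv; ring).
  rewrite rsum1_scale. field. lra.
Qed.

Lemma rhs_form n N k s y : (3 <= n)%nat -> (N < n)%nat -> in_Mn n y ->
  exists c, forall j,
    closed_loop_rhs n N k (fun m => INR m * PI / INR n + s) y j
    = vscale (C_c n N k * sin s) (vsub (pos n y j) c).
Proof.
  intros Hn HN HM. pose proof (INRpos3 n Hn) as Hnp.
  destruct (Mn_form n y Hn HM) as [c [u [Hu Hp]]].
  exists c. intro j. unfold closed_loop_rhs.
  set (w := rot (-(INR j * (2*PI/INR n))) u).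
  rewrite (vsum1_ext _ (fun m => vscale (-4 * k m * sin (INR m * PI / INR n) * sin s) w)).
  - rewrite vsum1_scale, C_c_eq by auto. rewrite Hp. fold w.
    rewrite (rsum1_ext _ (fun m => (k m * sin (INR m * PI / INR n)) * (-4 * sin s)))
      by (intros; ring).
    rewrite rsum1_scale. comps; ring.
  - intros m Hm. rewrite !Hp, !vsub_vadd. fold w.
    replace (rot (-(INR (j+m) * (2*PI/INR n))) u) with (rot (-(2*(INR m * PI / INR n))) w).
    2:{ unfold w; rewrite rot_comp. f_equal. rewrite plus_INR. field. lra. }
    replace (rot (-(INR (j+(n-m)) * (2*PI/INR n))) u) with (rot (2*(INR m * PI / INR n)) w).
    2:{ unfold w; rewrite rot_comp. symmetry. rewrite <- (rot_period _ 1). f_equal.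
        rewrite plus_INR, minus_INR by lia. simpl. field. lra. }
    apply term_id. unfold w. rewrite vz_rot. exact Hu.
Qed.


Lemma dplus f g t a b : derivable_pt_lim f t a -> derivable_pt_lim g t b ->
  derivable_pt_lim (fun s => f s + g s) t (a+b).
Proof. apply derivable_pt_lim_plus. Qed.
Lemma dminus f g t a b : derivable_pt_lim f t a -> derivable_pt_lim g t b ->
  derivable_pt_lim (fun s => f s - g s) t (a-b).
Proof. apply derivable_pt_lim_minus. Qed.
Lemma dmult f g t a b : derivable_pt_lim f t a -> derivable_pt_lim g t b ->
  derivable_pt_lim (fun s => f s * g s) t (a * g t + f t * b).
Proof. apply derivable_pt_lim_mult. Qed.
Lemma dconst c t : derivable_pt_lim (fun _ => c) t 0.
Proof. apply derivable_pt_lim_const. Qed.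
Lemma dsq f t a : derivable_pt_lim f t a -> derivable_pt_lim (fun s => f s ^ 2) t (2 * f t * a).
Proof.
  intro H. replace (2 * f t * a) with ((INR 2 * f t ^ Init.Nat.pred 2) * a) by (simpl; ring).
  apply (derivable_pt_lim_comp f (fun y => y ^ 2)); auto. apply derivable_pt_lim_pow.
Qed.
Lemma dexp K t : derivable_pt_lim (fun s => exp (-(K*s))) t (exp (-(K*t)) * -K).
Proof.
  apply (derivable_pt_lim_comp (fun s => -(K*s)) exp).
  - replace (-K) with (- (0 * t + K * 1)) by ring.
    apply (derivable_pt_lim_opp (fun s => K * s)).
    apply (dmult (fun _ => K) (fun s => s)). apply dconst. apply derivable_pt_lim_id.
  - apply derivable_pt_lim_exp.
Qed.

Lemma dlocal f g t l : derivable_pt_lim f t l -> 0 < t -> (forall s, 0 < s -> g s = f s) ->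
  derivable_pt_lim g t l.
Proof.
  intros H Ht Hg eps Heps. destruct (H eps Heps) as [d Hd].
  assert (Hm : 0 < Rmin d t) by (apply Rmin_pos; [apply cond_pos|auto]).
  exists (mkposreal _ Hm). intros h Hh Hhd. simpl in Hhd.
  pose proof (Rmin_l d t); pose proof (Rmin_r d t).
  assert (Hth : 0 < t + h) by (apply Rabs_def2 in Hhd; lra).
  rewrite (Hg (t+h) Hth), (Hg t Ht). apply Hd; auto. lra.
Qed.

Lemma sqrt_bound a b c : sqrt (a^2+b^2+c^2) <= Rabs a + Rabs b + Rabs c.
Proof.
  rewrite <- (sqrt_square (Rabs a + Rabs b + Rabs c)) by (pose proof (Rabs_pos a); pose proof (Rabs_pos b); pose proof (Rabs_pos c); lra).
  apply sqrt_le_1_alt.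
  pose proof (Rabs_pos a); pose proof (Rabs_pos b); pose proof (Rabs_pos c).
  replace (a^2) with (Rabs a * Rabs a) by (rewrite <- Rabs_mult, Rabs_right; [ring| nra]).
  replace (b^2) with (Rabs b * Rabs b) by (rewrite <- Rabs_mult, Rabs_right; [ring| nra]).
  replace (c^2) with (Rabs c * Rabs c) by (rewrite <- Rabs_mult, Rabs_right; [ring| nra]).
  nra.
Qed.

Lemma dnorm (F : R -> V3) t lam :
  derivable_pt_lim (fun s => vx (F s)) t (lam * vx (F t)) ->
  derivable_pt_lim (fun s => vy (F s)) t (lam * vy (F t)) ->
  derivable_pt_lim (fun s => vz (F s)) t (lam * vz (F t)) ->
  derivable_pt_lim (fun s => vnorm (F s)) t (lam * vnorm (F t)).
Proof.
  intros Hx Hy Hz. unfold vnorm.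
  set (g := fun s => vx (F s) ^ 2 + vy (F s) ^ 2 + vz (F s) ^ 2).
  change (derivable_pt_lim (fun s => sqrt (g s)) t (lam * sqrt (g t))).
  assert (Hg0 : 0 <= g t) by (unfold g; nra).
  destruct (Rle_lt_or_eq_dec 0 (g t) Hg0) as [Hp|He].
  - assert (Hd : derivable_pt_lim g t (2 * lam * g t)).
    { unfold g. replace (2 * lam * (vx (F t) ^ 2 + vy (F t) ^ 2 + vz (F t) ^ 2)) with
        (2 * vx (F t) * (lam * vx (F t)) + 2 * vy (F t) * (lam * vy (F t)) + 2 * vz (F t) * (lam * vz (F t))) by ring.
      apply dplus; [apply dplus|]; apply dsq; auto. }
    replace (lam * sqrt (g t)) with (/ (2 * sqrt (g t)) * (2 * lam * g t)).
    + apply (derivable_pt_lim_comp g sqrt). auto. apply derivable_pt_lim_sqrt; auto.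
    + pose proof (sqrt_lt_R0 _ Hp). rewrite <- (sqrt_sqrt (g t)) at 2 by lra. field. lra.
  - assert (E0 : vx (F t) = 0 /\ vy (F t) = 0 /\ vz (F t) = 0) by (unfold g in He; repeat split; nra).
    destruct E0 as [E1 [E2 E3]]. rewrite <- He, sqrt_0, Rmult_0_r.
    rewrite E1, Rmult_0_r in Hx. rewrite E2, Rmult_0_r in Hy. rewrite E3, Rmult_0_r in Hz.
    intros eps Heps.
    destruct (Hx (eps/3) ltac:(lra)) as [d1 H1].
    destruct (Hy (eps/3) ltac:(lra)) as [d2 H2].
    destruct (Hz (eps/3) ltac:(lra)) as [d3 H3].
    assert (Hm : 0 < Rmin d1 (Rmin d2 d3)) by (repeat apply Rmin_pos; apply cond_pos).
    exists (mkposreal _ Hm). intros h Hh Hhd. simpl in Hhd.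
    pose proof (Rmin_l d1 (Rmin d2 d3)); pose proof (Rmin_r d1 (Rmin d2 d3));
    pose proof (Rmin_l d2 d3); pose proof (Rmin_r d2 d3).
    specialize (H1 h Hh ltac:(lra)). specialize (H2 h Hh ltac:(lra)). specialize (H3 h Hh ltac:(lra)).
    rewrite E1, Rminus_0_r, Rminus_0_r in H1. rewrite E2, Rminus_0_r, Rminus_0_r in H2.
    rewrite E3, Rminus_0_r, Rminus_0_r in H3.
    rewrite <- He, sqrt_0, !Rminus_0_r. unfold g.
    unfold Rdiv in *. rewrite Rabs_mult in *. rewrite Rabs_inv in *.
    pose proof (Rabs_pos_lt h Hh). rewrite (Rabs_right (sqrt _)) by (apply Rle_ge, sqrt_pos).
    pose proof (sqrt_bound (vx (F (t+h))) (vy (F (t+h))) (vz (F (t+h)))).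
    pose proof (Rinv_0_lt_compat _ H6).
    apply Rle_lt_trans with ((Rabs (vx (F (t + h))) + Rabs (vy (F (t + h))) + Rabs (vz (F (t + h)))) * / Rabs h).
    + apply Rmult_le_compat_r; lra.
    + lra.
Qed.

Lemma rmax_lip s t : Rabs (Rmax 0 s - Rmax 0 t) <= Rabs (s - t).
Proof. unfold Rmax; destruct (Rle_dec 0 s); destruct (Rle_dec 0 t); unfold Rabs;
  repeat destruct Rcase_abs; lra. Qed.

Lemma cont_max f : cont_nonneg f -> forall t, continuity_pt (fun s => f (Rmax 0 s)) t.
Proof.
  intros Hf t. unfold continuity_pt, continue_in, limit1_in, limit_in; simpl; unfold R_dist.
  intros eps Heps. assert (Ht : 0 <= Rmax 0 t) by apply Rmax_l.
  destruct (Hf _ Ht eps Heps) as [d [Hd Hd2]].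
  exists d; split; auto. intros s [_ Hs]. apply Hd2. apply Rmax_l.
  pose proof (rmax_lip s t). lra.
Qed.

Lemma cp_minus f g t : continuity_pt f t -> continuity_pt g t -> continuity_pt (fun s => f s - g s) t.
Proof. apply continuity_pt_minus. Qed.
Lemma cp_mult f g t : continuity_pt f t -> continuity_pt g t -> continuity_pt (fun s => f s * g s) t.
Proof. apply continuity_pt_mult. Qed.
Lemma cp_const c t : continuity_pt (fun _ => c) t.
Proof. apply continuity_pt_const. intros a b; auto. Qed.
Lemma cp_plus f g t : continuity_pt f t -> continuity_pt g t -> continuity_pt (fun s => f s + g s) t.
Proof. apply continuity_pt_plus. Qed.
Lemma cp_sq f t : continuity_pt f t -> continuity_pt (fun s => f s ^ 2) t.
Proof. intro H. change (continuity_pt (fun s => f s * (f s * 1)) t). apply cp_mult; auto. apply cp_mult; auto. apply cp_const. Qed.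
Lemma cp_sqrt f t : continuity_pt f t -> 0 <= f t -> continuity_pt (fun s => sqrt (f s)) t.
Proof. intros H H0. apply (continuity_pt_comp f sqrt); auto. apply continuity_pt_sqrt; auto. Qed.
Lemma cp_exp K t : continuity_pt (fun s => exp (-(K*s))) t.
Proof. apply derivable_continuous_pt. exists (exp (-(K*t)) * -K). apply dexp. Qed.


Lemma dtarget f t l l' : derivable_pt_lim f t l -> l = l' -> derivable_pt_lim f t l'.
Proof. intros H E; subst; auto. Qed.

Theorem mainTheorem10 (n N : nat) (k : nat -> R) (rho alpha_s0 tau a : R)
  (fs : R -> R) (x : R -> Config)
  (Hn : (3 <= n)%nat)
  (Hrho : 0 < rho)
  (Hfs_cont : continuity fs)
  (Hfs_odd : forall p, fs (- p) = - fs p)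
  (Hfs_sign : forall p, p <> 0 -> p * fs p > 0)
  (Hfs_bnd : forall p, Rabs (fs p) <= 1)
  (Ha : 0 < a)
  (Hfs_der : exists d, derivable_pt_lim fs 0 d /\ d > a)
  (Halpha : 0 < alpha_s0)
  (Htau : 0 < tau)
  (HN : (0 < N)%nat /\ (N < n - 1)%nat)
  (Hk : forall m, (1 <= m <= N)%nat -> 0 < k m)
  (Hsol : hybrid_solution n N k rho alpha_s0 tau fs x)
  (HM : forall t, 0 <= t -> in_Mn n (x t)) :
  (forall t, 0 <= t -> forall i, (i < n)%nat -> p_i n rho (x t) i = pbar n rho (x t)) /\
  (forall (l : nat) t, INR l * tau < t < INR (S l) * tau -> forall i, (i < n)%nat ->
     derivable_pt_lim (fun s => p_i n rho (x s) i) t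
       (C_c n N k * sin (alpha_s0 * fs (p_i n rho (x (sample_time tau l)) i))
        * (p_i n rho (x t) i - 1))) /\
  (forall (l : nat) i, (i < n)%nat ->
     p_i n rho (x (INR (S l) * tau)) i =
       (p_i n rho (x (INR l * tau)) i - 1)
       * exp (C_c n N k * sin (alpha_s0 * fs (p_i n rho (x (sample_time tau l)) i)) * tau)
       + 1).
Proof.
  assert (Hn0: (n <> 0)%nat) by lia.
  destruct HN as [HN0 HNn].
  assert (P1 : forall t, 0 <= t -> forall i, (i<n)%nat -> p_i n rho (x t) i = pbar n rho (x t)).
  { intros t Ht i Hi. apply pbar_eq; auto. }
  assert (P2 : forall (l:nat) t, INR l * tau < t < INR (S l) * tau -> forall i, (i<n)%nat ->
     derivable_pt_lim (fun s => p_i n rho (x s) i) t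
       (C_c n N k * sin (alpha_s0 * fs (p_i n rho (x (sample_time tau l)) i)) * (p_i n rho (x t) i - 1))).
  { intros l t Ht i Hi.
    assert (Hl : 0 <= INR l * tau) by (pose proof (pos_INR l); nra).
    assert (Ht0 : 0 < t) by lra.
    assert (Hsamp : 0 <= sample_time tau l) by (destruct l; simpl; [lra| pose proof (pos_INR l); nra]).
    rewrite (P1 _ Hsamp i Hi).
    set (s0 := alpha_s0 * fs (pbar n rho (x (sample_time tau l)))).
    destruct (rhs_form n N k s0 (x t) Hn ltac:(lia) (HM t ltac:(lra))) as [c Hc].
    set (j := ((i+1) mod n)%nat).
    assert (Hj : (j < n)%nat) by (apply Nat.mod_upper_bound; auto).
    destruct (Hsol i Hi) as [_ [_ [_ Di]]]. specialize (Di l t Ht). cbv zeta in Di.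
    destruct (Hsol j Hj) as [_ [_ [_ Dj]]]. specialize (Dj l t Ht). cbv zeta in Dj.
    fold s0 in Di, Dj. rewrite !Hc in Di, Dj.
    set (lam := C_c n N k * sin s0) in *.
    assert (Ei : forall s, pos n (x s) i = x s i) by (intro; apply pos_lt; auto).
    assert (Ej : forall s, pos n (x s) (i+1) = x s j) by reflexivity.
    rewrite Ei in Di. rewrite pos_lt in Dj by auto.
    destruct Di as [Dix [Diy Diz]]. destruct Dj as [Djx [Djy Djz]].
    set (F := fun s => vsub (pos n (x s) (i+1)) (pos n (x s) i)).
    unfold p_i. fold (F t).
    change (derivable_pt_lim (fun s => 1 - vnorm (F s) * / rho) t (lam * (1 - vnorm (F t) / rho - 1))).
    replace (lam * (1 - vnorm (F t) / rho - 1)) with (0 - (lam * vnorm (F t) * / rho + vnorm (F t) * 0))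
      by (field; lra).
    apply dminus; [apply dconst|].
    apply (dmult (fun s => vnorm (F s)) (fun _ => / rho)); [|apply dconst].
    apply dnorm.
    - apply dlocal with (f := fun s => vx (x s j) - vx (x s i)); auto.
      + unfold F; rewrite Ei, Ej.
        replace (lam * vx (vsub (x t j) (x t i))) with
          (vx (vscale lam (vsub (x t j) c)) - vx (vscale lam (vsub (x t i) c)))
          by (unfold vscale, vsub, mkV; cbn [vx vy vz fst snd]; ring).
        apply dminus; auto.
      + intros s _; unfold F; rewrite Ei, Ej; reflexivity.
    - apply dlocal with (f := fun s => vy (x s j) - vy (x s i)); auto.
      + unfold F; rewrite Ei, Ej.
        replace (lam * vy (vsub (x t j) (x t i))) with
          (vy (vscale lam (vsub (x t j) c)) - vy (vscale lam (vsub (x t i) c)))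
          by (unfold vscale, vsub, mkV; cbn [vx vy vz fst snd]; ring).
        apply dminus; auto.
      + intros s _; unfold F; rewrite Ei, Ej; reflexivity.
    - apply dlocal with (f := fun s => vz (x s j) - vz (x s i)); auto.
      + unfold F; rewrite Ei, Ej.
        replace (lam * vz (vsub (x t j) (x t i))) with
          (vz (vscale lam (vsub (x t j) c)) - vz (vscale lam (vsub (x t i) c)))
          by (unfold vscale, vsub, mkV; cbn [vx vy vz fst snd]; ring).
        apply dminus; auto.
      + intros s _; unfold F; rewrite Ei, Ej; reflexivity. }
  split; [exact P1| split; [exact P2|]].
  intros l i Hi.
  set (K := C_c n N k * sin (alpha_s0 * fs (p_i n rho (x (sample_time tau l)) i))) in *.
  set (a0 := INR l * tau). set (b0 := INR (S l) * tau).
  assert (Ha0 : 0 <= a0) by (unfold a0; pose proof (pos_INR l); nra).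
  assert (Hab : b0 = a0 + tau) by (unfold a0, b0; rewrite S_INR; ring).
  set (Q := fun s => (p_i n rho (x (Rmax 0 s)) i - 1) * exp (-(K*s))).
  assert (HQd : forall s, a0 < s < b0 -> derivable_pt_lim Q s 0).
  { intros s Hs. unfold Q.
    eapply dtarget.
    { apply (dmult (fun s => p_i n rho (x (Rmax 0 s)) i - 1) (fun s => exp(-(K*s)))); [|apply dexp].
      apply (dminus _ (fun _ => 1)); [|apply dconst].
    apply dlocal with (f := fun s => p_i n rho (x s) i).
    - apply (P2 l s Hs i Hi).
    - lra.
    - intros s' Hs'. rewrite Rmax_right by lra. reflexivity. }
    cbv beta. rewrite Rmax_right by lra. unfold K; ring. }
  assert (Cx : forall m t, continuity_pt (fun s => vx (pos n (x (Rmax 0 s)) m)) t /\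
  continuity_pt (fun s => vy (pos n (x (Rmax 0 s)) m)) t /\
  continuity_pt (fun s => vz (pos n (x (Rmax 0 s)) m)) t).
  { intros m t. unfold pos. destruct (Hsol (m mod n)%nat ltac:(apply Nat.mod_upper_bound; auto)) as [H1 [H2 [H3 _]]].
    repeat split; apply (cont_max (fun s => _ (x s (m mod n)%nat))); auto. }
  assert (HQc : forall t, continuity_pt Q t).
  { intro t. unfold Q, p_i, vnorm.
    destruct (Cx (i+1)%nat t) as [X1 [Y1 Z1]]. destruct (Cx i t) as [X0 [Y0 Z0]].
    change (continuity_pt (fun s => (1 - sqrt ((vx (pos n (x (Rmax 0 s)) (i+1)) - vx (pos n (x (Rmax 0 s)) i)) ^ 2
        + (vy (pos n (x (Rmax 0 s)) (i+1)) - vy (pos n (x (Rmax 0 s)) i)) ^ 2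
        + (vz (pos n (x (Rmax 0 s)) (i+1)) - vz (pos n (x (Rmax 0 s)) i)) ^ 2) * / rho - 1) * exp (-(K*s))) t).
    apply cp_mult; [|apply cp_exp].
    apply cp_minus; [|apply cp_const].
    apply cp_minus; [apply cp_const|].
    apply cp_mult; [|apply cp_const].
    apply cp_sqrt; [|cbv beta; repeat apply Rplus_le_le_0_compat; apply pow2_ge_0].
    repeat apply cp_plus; apply cp_sq; apply cp_minus; auto. }
  assert (Hconst := null_derivative_loc Q a0 b0 (fun s P => exist _ 0 (HQd s P)) (fun s _ => HQc s)
     (fun s P => derive_pt_eq_0 _ _ _ _ (HQd s P))).
  specialize (Hconst b0 ltac:(lra)). unfold Q in Hconst.
  rewrite !Rmax_right in Hconst by lra.
  fold a0 b0.
  assert (HE : exp (-(K*b0)) * exp (K*b0) = 1) by (rewrite <- exp_plus; replace (-(K*b0) + K*b0) with 0 by ring; apply exp_0).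
  replace (exp (K * tau)) with (exp (-(K*a0)) * exp (K*b0)) by (rewrite <- exp_plus; f_equal; rewrite Hab; ring).
  replace (p_i n rho (x b0) i) with ((p_i n rho (x b0) i - 1) * exp (-(K*b0)) * exp (K*b0) + 1)
    by (rewrite Rmult_assoc, HE; ring).
  rewrite Hconst. ring.
Qed.
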